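(* Let $n\ge1$, $k\ge1$, and $\gamma=((i_1\,j_1),\dots,(i_k\,j_k))\in\Sigma^*_n(k)$. Then: 1. The sequence $(j_1,\dots,j_k)$ has pairwise distinct terms. 2. For all $l\in\{1,\dots,k\}$, $j_l$ is a fixed point of $\gamma_{l-1}$. 3. For all $l\in\{1,\dots,k\}$, $\gamma_l$ is obtained from $\gamma_{l-1}$ by inserting $j_l$ into the cycle of $i_l$ immediately after $i_l$; that is, $\gamma_l(i_l)=j_l$, $\gamma_l(j_l)=\gamma_{l-1}(i_l)$, and $\gamma_l(x)=\gamma_{l-1}(x)$ for $x\notin\{i_l,j_l\}$. 4. For all $m\in\{1,\dots,k\}$, the support of $\gamma_m$ equals $\bigcup_{l=1}^m\{i_l,j_l\}$.
   Context: Let $n\ge1$. $\mathfrak S_n$ is the symmetric group on $\{1,\dots,n\}$; products of permutations are composed from right to left, i.e. $(\sigma\pi)(x)=\sigma(\pi(x))$. $\mathsf T_n$ denotes the set of transpositions; a transposition is always written $(i\,j)$ with $i<j$. For $\sigma\in\mathfrak S_n$, $\ell(\sigma)$ is the number of cycles of $\sigma$ (fixed points counted) and $|\sigma|=n-\ell(\sigma)$. Write $\sigma_1\preccurlyeq\sigma_2$ iff $|\sigma_2|=|\sigma_1|+|\sigma_1^{-1}\sigma_2|$. For $k\ge0$, $\Sigma_n(k)=\{(\tau_1,\dots,\tau_k)\in(\mathsf T_n)^k : |\tau_1\cdots\tau_k|=k,\ \tau_1\cdots\tau_k\preccurlyeq(1\,2\,\dots\,n)\}$, and $\Sigma^*_n(k)$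 is the subset of those $((i_1\,j_1),\dots,(i_k\,j_k))\in\Sigma_n(k)$ with $i_1\le i_2\le\dots\le i_k$. For $\gamma=(\tau_1,\dots,\tau_k)$, $\gamma_l=\tau_1\cdots\tau_l$ for $0\le l\le k$ ($\gamma_0=\mathrm{id}$). The support of a permutation is its set of non-fixed points. *)

(* Defs.v *)
From HB Require Import structures.
From mathcomp Require Import all_boot all_order all_fingroup.
Set Implicit Arguments. Unset Strict Implicit. Unset Printing Implicit Defensive.
Local Open Scope group_scope.

(* Points {1,...,n} of the paper are modelled by 'I_n = {0,...,n-1}
   (point p of the paper is the ordinal p-1); this shift preserves the order. *)

(* Paper product: (pmul s t)(x) = s (t x)  (composition right to left).
   MathComp's s * t on perms is  x |-> t (s x), so pmul s t = t * s. *)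
Definition pmul n (s t : {perm 'I_n}) : {perm 'I_n} := (t * s)%g.

Definition ell n (s : {perm 'I_n}) : nat := #|porbits s|.
Definition absp n (s : {perm 'I_n}) : nat := n - ell s.

Definition preceq n (s1 s2 : {perm 'I_n}) : bool :=
  absp s2 == absp s1 + absp (pmul s1^-1 s2).

(* the long cycle (1 2 ... n), i.e. i |-> i+1 mod n on 'I_n *)
Definition lcycle n : {perm 'I_n} := perm (@ordS_inj n).

Definition trans n (p : 'I_n * 'I_n) : {perm 'I_n} := tperm p.1 p.2.

Definition prodT n (s : seq ('I_n * 'I_n)) : {perm 'I_n} :=
  foldl (fun acc p => pmul acc (trans p)) 1 s.

Definition gam n (s : seq ('I_n * 'I_n)) (l : nat) : {perm 'I_n} :=
  prodT (take l s).

Definition inSigma n k (g : k.-tuple ('I_n * 'I_n)) : bool :=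
  [&& all (fun p : 'I_n * 'I_n => p.1 < p.2) g,
      absp (prodT g) == k & preceq (prodT g) (lcycle n)].

Definition inSigmaStar n k (g : k.-tuple ('I_n * 'I_n)) : bool :=
  inSigma g && sorted leq [seq val p.1 | p <- g].

Definition supp n (s : {perm 'I_n}) : {set 'I_n} := [set x | s x != x].

(* Main.v *)
Require Import Defs.
From HB Require Import structures.
From mathcomp Require Import all_boot all_order all_fingroup.
From mathcomp Require Import zify.
Set Implicit Arguments. Unset Strict Implicit. Unset Printing Implicit Defensive.

Definition Dn n (s : {perm 'I_n}) := #|[set x | (val (s x) <= val x)%N]|.

Lemma ell_D n (s : {perm 'I_n}) : ell s <= Dn s.
Proof.
rewrite /ell /Dn.
set A := [set x | (val (s x) <= val x)%N].
apply: leq_trans (leq_imset_card (porbit s) A).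
apply: subset_leq_card; apply/subsetP => O /imsetP [x _ ->].
have Px : x \in porbit s x by apply: porbit_id.
case: (arg_maxnP (fun y : 'I_n => val y) Px) => y Py Hmax.
apply/imsetP; exists y.
  rewrite inE; apply: Hmax.
  have E : porbit s y = porbit s x by apply/eqP; rewrite eq_porbit_mem.
  by rewrite -E; exact: (mem_porbit s 1 y).
by apply/eqP; rewrite eq_porbit_mem porbit_sym.
Qed.

Lemma ell_le n (s : {perm 'I_n}) : ell s <= n.
Proof. rewrite /ell /porbits; apply: leq_trans (leq_imset_card _ _) _; by rewrite card_ord. Qed.

Lemma ell1 n : ell (1 : {perm 'I_n}) = n.
Proof.
rewrite /ell /porbits.
have E : forall x : 'I_n, porbit 1 x = [set x].
  move=> x; apply/setP => y; rewrite inE; apply/porbitP/eqP.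
    by move=> [i ->]; rewrite expg1n perm1.
  by move=> ->; exists 0; rewrite expg0 perm1.
rewrite (eq_imset _ E) card_imset ?card_ord //; exact: set1_inj.
Qed.

Lemma ell_gt0 n (s : {perm 'I_n.+1}) : 0 < ell s.
Proof.
rewrite /ell card_gt0; apply/set0Pn; exists (porbit s ord0).
by apply/imsetP; exists ord0.
Qed.

Lemma ellV n (s : {perm 'I_n}) : ell s^-1 = ell s.
Proof. by rewrite /ell porbitsV. Qed.

Lemma ell_tperm_r n (s : {perm 'I_n}) a b : a != b ->
  ell s <= (ell (tperm a b * s)).+1 /\ ell (tperm a b * s) <= (ell s).+1.
Proof.
move=> ab; have := porbits_mul_tperm s a b; rewrite /ell ab /=.
case: (a \in porbit s b) => /=; lia.
Qed.

Lemma ell_tperm_l n (s : {perm 'I_n}) a b : a != b ->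
  ell (s * tperm a b) <= (ell s).+1.
Proof.
move=> ab; rewrite -ellV invMg tpermV -(ellV s).
by case: (ell_tperm_r (s^-1) ab).
Qed.

Lemma lcycleE n (y : 'I_n) : val (lcycle n y) = y.+1 %% n.
Proof. by rewrite /lcycle permE. Qed.

Lemma D_bound n (s : {perm 'I_n.+1}) :
  Dn s + ell (pmul s^-1 (lcycle n.+1)) <= n.+2.
Proof.
rewrite /pmul; set r := (lcycle n.+1 * s^-1)%g.
set A := [set x | (val (s x) <= val x)%N].
set B := r @^-1: A.
have DA : Dn s = #|B| by rewrite /B card_preimset //; exact: perm_inj.
set C := [set y | (val y < val (r y))%N].
have BC : B \subset ord_max |: C.
  apply/subsetP => y; rewrite !inE permM permKV => H.
  case: (eqVneq y ord_max) => //= ym.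
  have yn : (val y < n)%N.
    have := ltn_ord y; rewrite ltnS leq_eqVlt => /orP [/eqP yv|//].
    by case/eqP: ym; apply: val_inj.
  by move: H; rewrite lcycleE modn_small.
have CC := cardsC C.
have DC : Dn r = #|~: C|.
  by rewrite /Dn; apply: eq_card => y; rewrite !inE -leqNgt.
have := ell_D r; rewrite DC.
have := subset_leq_card BC; rewrite cardsU1 -DA card_ord in CC *.
move=> h1 h2; move: CC h1; case: (ord_max \in C) => /= CC h1;
  have := leq_add h1 h2; rewrite -addnA CC; lia.
Qed.

Lemma Dn_sum n (s : {perm 'I_n}) : Dn s = \sum_x ((val (s x) <= val x)%N : nat).
Proof.
rewrite /Dn -sum1_card big_mkcond /=; apply: eq_bigr => x _; rewrite inE.
by case: ifP.
Qed.

Lemma Dn_step n (s : {perm 'I_n}) (a b : 'I_n) : (val a < val b)%N ->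
  Dn s + ((val (s b) <= val a)%N + (val (s a) <= val b)%N) =
  Dn (tperm a b * s) + ((val (s a) <= val a)%N + (val (s b) <= val b)%N).
Proof.
move=> ab; have ba : b != a by apply/eqP => E; move: ab; rewrite E ltnn.
rewrite !Dn_sum (bigD1 a) // (bigD1 b) //= [in RHS](bigD1 a) // (bigD1 b) //=.
rewrite !permM tpermL tpermR.
set X := \sum_(i | _) _; set Y := \sum_(i | _) _.
have -> : X = Y.
  apply: eq_bigr => i /andP [ia ib]; rewrite permM tpermD //; by rewrite eq_sym.
lia.
Qed.

Lemma Dn_local n (s : {perm 'I_n}) (a b : 'I_n) : (val a < val b)%N ->
  Dn s = (Dn (tperm a b * s)).+1 ->
  [/\ (val a < val (s b))%N, (val (s b) <= val b)%N &
      ((val (s a) <= val a)%N = (val (s a) <= val b)%N)].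
Proof.
move=> ab E; have := Dn_step s ab; rewrite E.
move: (Dn _) (val (s a)) (val (s b)) (val a) (val b) ab => D p q x y xy.
case: (leqP q x); case: (leqP p y);
case: (leqP p x); case: (leqP q y) => //=;
move=> *; try lia.
all: try (split; lia).
all: exfalso; lia.
Qed.

Definition Ai n (s : seq ('I_n.+1 * 'I_n.+1)) l := (nth (ord0, ord0) s l).1.
Definition Bi n (s : seq ('I_n.+1 * 'I_n.+1)) l := (nth (ord0, ord0) s l).2.

Lemma gam0 n (s : seq ('I_n * 'I_n)) : gam s 0 = 1%g.
Proof. by rewrite /gam take0. Qed.

Lemma gamS n (s : seq ('I_n.+1 * 'I_n.+1)) l : (l < size s)%N ->
  gam s l.+1 = (tperm (Ai s l) (Bi s l) * gam s l)%g.
Proof.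
by move=> ls; rewrite /gam (take_nth (ord0, ord0)) // /prodT foldl_rcons.
Qed.

Lemma gamSE n (s : seq ('I_n.+1 * 'I_n.+1)) l x : (l < size s)%N ->
  gam s l.+1 x = gam s l (tperm (Ai s l) (Bi s l) x).
Proof. by move=> ls; rewrite gamS // permM. Qed.

Lemma hg_lt n k (g : k.-tuple ('I_n.+1 * 'I_n.+1)) : inSigmaStar g ->
  forall l, (l < k)%N -> (val (Ai g l) < val (Bi g l))%N.
Proof.
case/andP => /and3P [/(all_nthP (ord0, ord0)) H _ _] _ l lk.
by apply: H; rewrite size_tuple.
Qed.

Lemma hg_sorted n k (g : k.-tuple ('I_n.+1 * 'I_n.+1)) : inSigmaStar g ->
  forall m l, (m <= l)%N -> (l < k)%N -> (val (Ai g m) <= val (Ai g l))%N.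
Proof.
case/andP => _ S m l ml lk.
have := sorted_leq_nth leq_trans leqnn 0 S.
rewrite size_map size_tuple => H.
have := H m l; rewrite !inE /= !(nth_map (ord0, ord0)) ?size_tuple //;
  last by apply: leq_ltn_trans lk.
apply => //; by apply: leq_ltn_trans lk.
Qed.

Lemma hg_D n k (g : k.-tuple ('I_n.+1 * 'I_n.+1)) : inSigmaStar g ->
  (k <= n)%N /\ forall l, (l <= k)%N -> Dn (gam g l) = n.+1 - l.
Proof.
move=> hg; have lt := hg_lt hg.
have ab : forall l, (l < k)%N -> Ai g l != Bi g l.
  by move=> l lk; apply/eqP => E; have := lt l lk; rewrite E ltnn.
move: (hg) => /andP [/and3P [_ Hk Hp] _].
have gk : prodT g = gam g k by rewrite /gam take_oversize // size_tuple.
rewrite gk in Hk Hp.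
have He : forall l, (l <= k)%N -> (n.+1 - l <= ell (gam g l))%N.
  elim => [|l IH] lk; first by rewrite gam0 ell1 subn0.
  have := IH (ltnW lk); rewrite gamS ?size_tuple //.
  case: (ell_tperm_r (gam g l) (ab l lk)) => h1 h2 h3. have := leq_trans h3 h1. move: (ell (tperm _ _ * _)) h1 h2 => e h1 h2. lia.
have Hr : forall l, (l < k)%N ->
   (ell (pmul (gam g l.+1)^-1 (lcycle n.+1)) <= (ell (pmul (gam g l)^-1 (lcycle n.+1))).+1)%N.
  move=> l lk; rewrite gamS ?size_tuple // /pmul invMg tpermV mulgA.
  exact: (ell_tperm_l _ (ab l lk)).
have Hrk : (k.+1 <= ell (pmul (gam g k)^-1 (lcycle n.+1)))%N.
  move: Hk Hp; rewrite /preceq /absp => /eqP Hk /eqP Hp.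
  have := ell_gt0 (lcycle n.+1); have := ell_le (pmul (gam g k)^-1 (lcycle n.+1)).
  have := ell_le (gam g k); lia.
have Hrl : forall d, (d <= k)%N -> ((k - d).+1 <= ell (pmul (gam g (k - d))^-1 (lcycle n.+1)))%N.
  elim => [|d IH] dk; first by rewrite subn0.
  have h2 := IH (ltnW dk).
  have h1 := Hr (k - d.+1) (ltac:(lia)).
  rewrite subnSK // in h1.
  move: (ell (pmul (gam g (k - d.+1))^-1 _)) h1 h2 => e1.
  move: (ell (pmul (gam g (k - d))^-1 _)) => e2; lia.
have HD : forall l, (l <= k)%N -> Dn (gam g l) = n.+1 - l.
  move=> l lk; have := Hrl (k - l) (leq_subr _ _); rewrite subKn //.
  have := D_bound (gam g l); have := He l lk; have := ell_D (gam g l); lia.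
split => //.
have := HD k (leqnn _); have := ell_D (gam g k); have := ell_gt0 (gam g k); lia.
Qed.

Lemma local_l n k (g : k.-tuple ('I_n.+1 * 'I_n.+1)) : inSigmaStar g ->
  forall l, (l < k)%N ->
  [/\ (val (Ai g l) < val (gam g l (Bi g l)))%N,
      (val (gam g l (Bi g l)) <= val (Bi g l))%N &
      (val (gam g l (Ai g l)) <= val (Ai g l))%N =
      (val (gam g l (Ai g l)) <= val (Bi g l))%N].
Proof.
move=> hg l lk; apply: Dn_local; first exact: hg_lt.
have [kn HD] := hg_D hg.
rewrite -gamS ?size_tuple // !HD //; lia.
Qed.

Lemma part2 n k (g : k.-tuple ('I_n.+1 * 'I_n.+1)) : inSigmaStar g ->
  forall l, (l < k)%N -> gam g l (Bi g l) = Bi g l.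
Proof.
move=> hg l lk.
have Q : forall t, (t <= l)%N -> gam g t (Bi g l) = Bi g l \/
   ~~ ((val (Ai g l) < val (gam g t (Bi g l)))%N && (val (gam g t (Bi g l)) <= val (Bi g l))%N).
  elim => [|t IH] tl; first by left; rewrite gam0 perm1.
  have tk : (t < k)%N by lia.
  rewrite gamSE ?size_tuple //.
  have S := hg_sorted hg (ltnW tl) lk.
  have L := hg_lt hg lk.
  case: (eqVneq (Bi g l) (Bi g t)) => [Eb|nb].
    right; rewrite Eb tpermR.
    have [_ _ E] := local_l hg tk.
    apply/negP => /andP [h1 h2]; move: E; rewrite h2 => H.
    move: h1 S H; lia.
  case: (eqVneq (Bi g l) (Ai g t)) => [Ea|na].
    by move: S L; rewrite -Ea; lia.
  rewrite tpermD 1?eq_sym //; exact: IH (ltnW tl).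
have [h1 h2 _] := local_l hg lk.
case: (Q l (leqnn _)) => // /negP; by rewrite h1 h2.
Qed.

Lemma part3 n k (g : k.-tuple ('I_n.+1 * 'I_n.+1)) : inSigmaStar g ->
  forall l, (l < k)%N ->
  [/\ gam g l.+1 (Ai g l) = Bi g l,
      gam g l.+1 (Bi g l) = gam g l (Ai g l)
    & forall x, x != Ai g l -> x != Bi g l -> gam g l.+1 x = gam g l x].
Proof.
move=> hg l lk; rewrite !gamSE ?size_tuple // tpermL tpermR part2 //.
split => // x xa xb; rewrite gamSE ?size_tuple // tpermD // eq_sym //.
Qed.

Lemma part4 n k (g : k.-tuple ('I_n.+1 * 'I_n.+1)) : inSigmaStar g ->
  forall m, (m <= k)%N ->
  supp (gam g m) = \bigcup_(l : 'I_k | (l < m)%N) [set Ai g l; Bi g l].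
Proof.
move=> hg; elim => [|m IH] mk.
  rewrite big_pred0 => [|l]; last by rewrite ltn0.
  by apply/setP => x; rewrite !inE gam0 perm1 eqxx.
have mk' : (m < k)%N by [].
rewrite (bigD1 (Ordinal mk')) ?ltnSn //=.
rewrite (eq_bigl (fun l : 'I_k => (l < m)%N)); last first.
  move=> l; rewrite ltnS leq_eqVlt; case: (ltnP l m) => lm; rewrite ?orbT ?orbF.
    by apply/eqP => E; move: lm; rewrite E /= ltnn.
  case: (eqVneq l (Ordinal mk')) => [->|ne]; first by rewrite eqxx.
  by rewrite andbT; apply/eqP => /= E; case/eqP: ne; apply: val_inj.
rewrite -IH ?(ltnW mk) //.
have [h1 h2 h3] := part3 hg mk'.
have P2 := part2 hg mk'.
have ab : Ai g m != Bi g m by apply/eqP => E; have := hg_lt hg mk'; rewrite E ltnn.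
apply/setP => x; rewrite /supp !inE.
case: (eqVneq x (Ai g m)) => [->|xa] /=.
  by rewrite h1 eq_sym ab.
case: (eqVneq x (Bi g m)) => [->|xb] /=.
  by rewrite h2 -{1}P2 (inj_eq perm_inj) ab ?orbT.
by rewrite h3.
Qed.

Lemma part1 n k (g : k.-tuple ('I_n.+1 * 'I_n.+1)) : inSigmaStar g ->
  forall i j, (i < j)%N -> (j < k)%N -> Bi g i != Bi g j.
Proof.
move=> hg i j ij jk; apply/eqP => E.
have ik : (i < k)%N by apply: ltn_trans jk.
have := part4 hg (ltnW jk).
move/setP => /(_ (Bi g i)).
rewrite /supp inE.
have -> : Bi g i \in \bigcup_(l : 'I_k | (l < j)%N) [set Ai g l; Bi g l].
  by apply/bigcupP; exists (Ordinal ik) => //; rewrite !inE eqxx orbT.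
by rewrite E part2 // eqxx.
Qed.

Theorem lemma3p4 (n k : nat) (hn : 1 <= n) (hk : 1 <= k)
    (g : k.-tuple ('I_n * 'I_n)) (hg : inSigmaStar g) :
  [/\ uniq [seq p.2 | p <- g],
      (forall l : 'I_k, gam g l (tnth g l).2 = (tnth g l).2),
      (forall l : 'I_k,
         [/\ gam g l.+1 (tnth g l).1 = (tnth g l).2,
             gam g l.+1 (tnth g l).2 = gam g l (tnth g l).1
           & forall x, x != (tnth g l).1 -> x != (tnth g l).2 ->
               gam g l.+1 x = gam g l x])
    & (forall m : nat, 1 <= m -> m <= k ->
         supp (gam g m) =
         \bigcup_(l : 'I_k | l < m) [set (tnth g l).1; (tnth g l).2])].
Proof.
case: n hn g hg => [//|n] _ g hg.
have tn : forall l : 'I_k, tnth g l = nth (ord0, ord0) g l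
  by move=> l; apply: tnth_nth.
split.
- apply/(uniqP ord0) => i j; rewrite !inE size_map size_tuple => ik jk.
  rewrite !(nth_map (ord0, ord0)) ?size_tuple // => E.
  case: (ltngtP i j) => // h.
    by have := part1 hg h jk; rewrite /Bi E eqxx.
  by have := part1 hg h ik; rewrite /Bi E eqxx.
- move=> l; rewrite tn; have := part2 hg (ltn_ord l); rewrite /Bi; done.
- by move=> l; rewrite tn; have := part3 hg (ltn_ord l); rewrite /Ai /Bi; apply.
- move=> m _ mk; rewrite part4 //; apply: eq_bigr => l _; by rewrite tn.
Qed.
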